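(* Let $(x_t)_{t=1}^T$ be a sequence with $x_t>0$ for all $t$. Then for any $\alpha\in[0,1]$, $$\sum_{t=1}^T\frac{x_t^{1-\alpha}}{\sqrt{1+\sum_{s=1}^t x_s^{1-2\alpha}}}\le\mathcal{O}\Big(\sqrt{\Big(\sum_{t=1}^Tx_t\Big)\log\Big(1+\sum_{t=1}^Tx_t^{1-2\alpha}\Big)}\Big).$$
   Context: $\mathcal{O}(\cdot)$ hides an absolute constant (independent of $T$, $\alpha$ and the sequence). *)

(* Defs.v *)
From Stdlib Require Import Reals.
Open Scope R_scope.

Fixpoint sum1 (f : nat -> R) (n : nat) : R :=
  match n with
  | O => 0
  | S m => sum1 f m + f (S m)
  end.

(* Main.v *)
Require Import Defs.
From Stdlib Require Import Reals Lra Psatz.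
Open Scope R_scope.

Lemma ln_le_xm1 y : 0 < y -> ln y <= y - 1.
Proof. intro H. pose proof (exp_ineq1_le (ln y)). rewrite exp_ln in H0; lra. Qed.

Lemma step_ln a b : 0 <= a -> 0 < b -> a / (b + a) <= ln (b + a) - ln b.
Proof.
  intros Ha Hb.
  assert (Hc : 0 < b + a) by lra.
  assert (E : b = (b + a) * (b / (b + a))) by (field; lra).
  assert (Hq : 0 < b / (b + a)) by (apply Rdiv_lt_0_compat; lra).
  assert (ln b = ln (b + a) + ln (b / (b + a))).
  { rewrite <- ln_mult by lra. f_equal. exact E. }
  pose proof (ln_le_xm1 _ Hq).
  assert (b / (b + a) - 1 = - (a / (b + a))) by (field; lra). lra.
Qed.

Lemma sum1_nonneg f n : (forall t, (1 <= t <= n)%nat -> 0 <= f t) -> 0 <= sum1 f n.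
Proof.
  induction n; simpl; intros H. lra.
  assert (0 <= sum1 f n) by (apply IHn; intros; apply H; lia).
  assert (0 <= f (S n)) by (apply H; lia). lra.
Qed.

Lemma cs p q n : (forall t, (1 <= t <= n)%nat -> 0 <= p t /\ 0 <= q t) ->
  sum1 (fun t => p t * q t) n <=
  sqrt (sum1 (fun t => p t ^ 2) n) * sqrt (sum1 (fun t => q t ^ 2) n).
Proof.
  induction n; cbn [sum1]; intros H. rewrite sqrt_0; lra.
  assert (IH := IHn (fun t Ht => H t ltac:(lia))).
  destruct (H (S n) ltac:(lia)) as [Hp Hq].
  set (U := sum1 (fun t => p t ^ 2) n) in *.
  set (V := sum1 (fun t => q t ^ 2) n) in *.
  set (A := sum1 (fun t => p t * q t) n) in *.
  assert (HU : 0 <= U) by (apply sum1_nonneg; intros; apply pow2_ge_0).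
  assert (HV : 0 <= V) by (apply sum1_nonneg; intros; apply pow2_ge_0).
  pose proof (sqrt_sqrt U HU). pose proof (sqrt_sqrt V HV).
  pose proof (sqrt_pos U). pose proof (sqrt_pos V).
  set (P := sqrt U) in *. set (Q := sqrt V) in *.
  assert (E1 : U + p (S n) ^ 2 = Rsqr (sqrt (U + p (S n) ^ 2))).
  { rewrite Rsqr_sqrt; nra. }
  assert (E2 : V + q (S n) ^ 2 = Rsqr (sqrt (V + q (S n) ^ 2))).
  { rewrite Rsqr_sqrt; nra. }
  pose proof (sqrt_pos (U + p (S n) ^ 2)). pose proof (sqrt_pos (V + q (S n) ^ 2)).
  set (P' := sqrt (U + p (S n) ^ 2)) in *. set (Q' := sqrt (V + q (S n) ^ 2)) in *.
  unfold Rsqr in *.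
  assert (K : (P*Q + p (S n) * q (S n)) ^ 2 <= (P' * Q') ^ 2).
  { replace ((P' * Q') ^ 2) with ((P'*P') * (Q'*Q')) by ring.
    rewrite <- E1, <- E2. rewrite <- H0, <- H1.
    pose proof (pow2_ge_0 (P * q (S n) - p (S n) * Q)).
    assert (P * Q * (p (S n) * q (S n)) >= 0) by (apply Rle_ge; repeat apply Rmult_le_pos; lra).
    nra. }
  assert (P*Q + p (S n) * q (S n) <= P' * Q').
  { apply Rsqr_incr_0_var. unfold Rsqr. nra. nra. }
  lra.
Qed.

Lemma sum1_ext f g n : (forall t, (1 <= t <= n)%nat -> f t = g t) -> sum1 f n = sum1 g n.
Proof.
  induction n; cbn [sum1]; intros H. reflexivity.
  rewrite IHn by (intros; apply H; lia). rewrite H by lia. reflexivity.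
Qed.

Lemma sum1_le f g n : (forall t, (1 <= t <= n)%nat -> f t <= g t) -> sum1 f n <= sum1 g n.
Proof.
  induction n; cbn [sum1]; intros H. lra.
  assert (sum1 f n <= sum1 g n) by (apply IHn; intros; apply H; lia).
  assert (f (S n) <= g (S n)) by (apply H; lia). lra.
Qed.

Lemma log_sum a n : (forall t, 0 <= a t) ->
  sum1 (fun t => a t / (1 + sum1 a t)) n <= ln (1 + sum1 a n).
Proof.
  intros Ha. induction n; cbn [sum1].
  - rewrite Rplus_0_r, ln_1. lra.
  - assert (0 <= sum1 a n) by (apply sum1_nonneg; intros; auto).
    pose proof (step_ln (a (S n)) (1 + sum1 a n) (Ha _) ltac:(lra)).
    replace (1 + (sum1 a n + a (S n))) with (1 + sum1 a n + a (S n)) by ring.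
    lra.
Qed.

Lemma Rpower_pos x y : 0 < Rpower x y.
Proof. unfold Rpower. apply exp_pos. Qed.

Theorem lemma2 :
  exists C : R, 0 < C /\
  forall (T : nat) (x : nat -> R) (alpha : R),
    (forall t, (1 <= t <= T)%nat -> 0 < x t) ->
    0 <= alpha <= 1 ->
    sum1 (fun t => Rpower (x t) (1 - alpha) /
                   sqrt (1 + sum1 (fun s => Rpower (x s) (1 - 2 * alpha)) t)) T
    <= C * sqrt (sum1 x T * ln (1 + sum1 (fun t => Rpower (x t) (1 - 2 * alpha)) T)).
Proof.
  exists 1. split. lra.
  intros T x alpha Hx Ha.
  set (a := fun s => Rpower (x s) (1 - 2 * alpha)).
  assert (Hapos : forall t, 0 <= a t) by (intro; apply Rlt_le, Rpower_pos).
  assert (HS : forall t, 0 <= sum1 a t) by (intro; apply sum1_nonneg; auto).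
  rewrite (sum1_ext _ (fun t => sqrt (x t) * sqrt (a t / (1 + sum1 a t)))).
  2:{ intros t Ht. specialize (Hx t Ht). pose proof (HS t).
      rewrite sqrt_div_alt by lra. unfold Rdiv. rewrite <- Rmult_assoc. f_equal.
      unfold a. rewrite <- (Rpower_sqrt (Rpower _ _)) by apply Rpower_pos.
      rewrite <- (Rpower_sqrt (x t)) by lra. rewrite Rpower_mult, <- Rpower_plus.
      f_equal. field. }
  eapply Rle_trans. apply cs.
  { intros t Ht. split; apply sqrt_pos. }
  rewrite (sum1_ext (fun t => sqrt (x t) ^ 2) x).
  2:{ intros t Ht. apply pow2_sqrt. apply Rlt_le, Hx, Ht. }
  rewrite (sum1_ext (fun t => sqrt (a t / (1 + sum1 a t)) ^ 2) (fun t => a t / (1 + sum1 a t))).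
  2:{ intros t Ht. apply pow2_sqrt. unfold Rdiv; apply Rmult_le_pos; auto. apply Rlt_le, Rinv_0_lt_compat. pose proof (HS t); lra. }
  rewrite Rmult_1_l. rewrite sqrt_mult_alt.
  2:{ apply sum1_nonneg. intros; apply Rlt_le, Hx; auto. }
  apply Rmult_le_compat_l. apply sqrt_pos.
  apply sqrt_le_1_alt. apply log_sum. auto.
Qed.
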